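(* Let $k=\mathbb Q(\sqrt m)$ be a real quadratic field in which the prime $p>2$ splits as $p=\mathfrak p_1\mathfrak p_2$, let $n\geq1$, and let $\alpha\in k^\times$ be prime to $p$ with $\mathrm N_{k/\mathbb Q}(\alpha)^{p-1}\equiv1\pmod{p^{n+1}}$. Then either $\delta_{\mathfrak p_1}(\alpha)=\delta_{\mathfrak p_2}(\alpha)$, or $\delta_{\mathfrak p_1}(\alpha)\geq n$ and $\delta_{\mathfrak p_2}(\alpha)\geq n$. Consequently, if $\alpha^{p-1}\not\equiv1\pmod{p^{n+1}}$, then $\alpha^{p-1}=1+p\cdot p^{\delta}\cdot\beta$ with $\delta=\delta_{\mathfrak p_1}(\alpha)=\delta_{\mathfrak p_2}(\alpha)<n$ and $\beta$ prime to $p$.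
   Context: For $x\in k^\times$ prime to $p$, $\delta_{\mathfrak p_j}(x)\geq0$ is defined by $\delta_{\mathfrak p_j}(x)+1=v_{\mathfrak p_j}(x^{p-1}-1)$. *)

(* Defs.v *)
(* the real quadratic field k = Q(sqrt m) is realized inside
   the algebraic numbers algC; O_k = k ∩ (algebraic integers). *)
From HB Require Import structures.
From mathcomp Require Import all_boot all_order all_algebra all_field.
Set Implicit Arguments.
Unset Strict Implicit.
Unset Printing Implicit Defensive.
Import Order.TTheory GRing.Theory Num.Theory.
Local Open Scope ring_scope.

Definition sqm (m : nat) : algC := sqrtC (m%:R).

Definition inK (w x : algC) : Prop := exists a b : rat, x = ratr a + ratr b * w.

Definition inO (w x : algC) : Prop := inK w x /\ x \in Aint.

Definition is_ideal (w : algC) (I : algC -> Prop) : Prop :=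
  [/\ (forall x, I x -> inO w x), I 0,
      (forall x y, I x -> I y -> I (x + y)) &
      (forall r x, inO w r -> I x -> I (r * x))].

Definition prime_ideal (w : algC) (I : algC -> Prop) : Prop :=
  [/\ is_ideal w I, ~ I 1 &
      (forall x y, inO w x -> inO w y -> I (x * y) -> I x \/ I y)].

Definition idmul (I J : algC -> Prop) (x : algC) : Prop :=
  exists s : seq (algC * algC),
    (forall q, q \in s -> I q.1 /\ J q.2) /\ x = \sum_(q <- s) q.1 * q.2.

Definition idpow (w : algC) (P : algC -> Prop) (e : nat) : algC -> Prop :=
  iter e (idmul P) (inO w).

Definition principal (w c : algC) (x : algC) : Prop := exists y, inO w y /\ x = c * y.

Definition splits_as (w : algC) (p : nat) (P1 P2 : algC -> Prop) : Prop :=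
  [/\ prime_ideal w P1, prime_ideal w P2, ~ (forall x, P1 x <-> P2 x) &
      (forall x, principal w p%:R x <-> idmul P1 P2 x)].

(* v_P(y) >= e, for y in k (e >= 0): y \in P^e O_{k,P},
   i.e. y = a/b with a \in P^e, b \in O_k \ P *)
Definition vge (w : algC) (P : algC -> Prop) (y : algC) (e : nat) : Prop :=
  exists a b, [/\ inO w a, inO w b, ~ P b, y = a / b & idpow w P e a].

Definition unit_at (w : algC) (P : algC -> Prop) (y : algC) : Prop :=
  [/\ y != 0, vge w P y 0 & vge w P y^-1 0].

(* delta_P(x) >= d, where delta_P(x) + 1 = v_P(x^(p-1) - 1)
   (delta = +oo when x^(p-1) = 1) *)
Definition delta_ge (w : algC) (p : nat) (P : algC -> Prop) (x : algC) (d : nat) : Prop :=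
  vge w P (x ^+ (p - 1) - 1) d.+1.

Definition delta_eq (w : algC) (p : nat) (P : algC -> Prop) (x : algC) (d : nat) : Prop :=
  forall d', delta_ge w p P x d' <-> (d' <= d)%N.

(* u = 1 mod p^e in k: u - 1 = p^e z with z p-integral (integral at P1, P2) *)
Definition kcong1 (w : algC) (P1 P2 : algC -> Prop) (p e : nat) (u : algC) : Prop :=
  exists z, [/\ vge w P1 z 0, vge w P2 z 0 & u - 1 = (p ^ e)%:R * z].

Definition ratcong1 (p e : nat) (q : rat) : Prop :=
  exists x y : int, ~~ (p %| `|y|)%N /\ q - 1 = (p ^ e)%:R * x%:~R / y%:~R.

(* Main.v *)
Require Import Defs.
From HB Require Import structures.
From mathcomp Require Import all_boot all_order all_algebra all_field.
From Stdlib Require Import ClassicalEpsilon Classical.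
From mathcomp Require Import ring.
Set Implicit Arguments.
Unset Strict Implicit.
Unset Printing Implicit Defensive.
Import Order.TTheory GRing.Theory Num.Theory.
Local Open Scope ring_scope.

Section Quad.
Variable m : nat.
Hypothesis m_nsq : forall r : nat, (r * r != m)%N.
Variable p : nat.
Hypothesis p_prime : prime p.
Local Notation w := (sqm m).

Lemma w2 : w ^+ 2 = m%:R.
Proof. by rewrite /sqm sqrtCK. Qed.

Lemma w_irr (q : rat) : w != ratr q.
Proof.
apply/eqP => wq.
have hA : ratr q \in Aint.
  apply: (@root_monic_Aint ('X^2 - (m%:R)%:P)).
  - by rewrite rootE !hornerE -wq w2 subrr.
  - by rewrite monicXnsubC.
  - by rewrite polyOverXnsubC rpred_nat.
have /intrP [z hz] := Cint_rat_Aint (Crat_rat q) hA.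
have z0 : (0 <= z)%R by rewrite -(ler0z algC) -hz -wq sqrtC_ge0 ler0n.
case: z z0 hz => // n _ hz.
have := w2; rewrite wq hz -[(Posz n)%:~R]/(n%:R) -natrX.
move/eqP; rewrite eqr_nat => /eqP hn.
by move: (m_nsq n); rewrite -hn mulnn eqxx.
Qed.

Lemma rep_uniq a b c d :
  ratr a + ratr b * w = ratr c + ratr d * w -> a = c /\ b = d.
Proof.
move=> h.
have bd : b = d.
  apply/eqP; apply/negPn/negP => nbd.
  have nbd' : ratr (b - d) != 0 :> algC by rewrite fmorph_eq0 subr_eq0.
  have e : ratr (b - d) * w = ratr (c - a) :> algC.
    have hc : ratr c = ratr a + ratr b * w - ratr d * w :> algC by rewrite h; ring.
    by rewrite !rmorphB /= hc; ring.
  have : w = ratr ((c - a) / (b - d)).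
    by rewrite fmorph_div /= -e mulrC mulKf.
  by move/eqP; rewrite (negbTE (w_irr _)).
split=> //; subst d; apply: (fmorph_inj (@ratr algC)).
by move/addIr: h.
Qed.


Lemma ww : w * w = m%:R.
Proof. by rewrite -expr2 w2. Qed.

Definition sgw (x : algC) : algC :=
  let e := epsilon (inhabits (0:rat, 0:rat))
             (fun ab : rat * rat => x = ratr ab.1 + ratr ab.2 * w) in
  ratr e.1 - ratr e.2 * w.

Lemma sgwE a b : sgw (ratr a + ratr b * w) = ratr a - ratr b * w.
Proof.
rewrite /sgw.
set P := (fun ab : rat * rat => _).
have := @epsilon_spec _ (inhabits (0:rat, 0:rat)) P (ex_intro _ (a, b) erefl).
case: (epsilon _ _) => c d /= /rep_uniq [-> ->] //.
Qed.

Local Notation K := (inK w).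

Lemma inK_sgw x : K (sgw x).
Proof. rewrite /sgw /=; eexists; eexists; rewrite -mulNr -rmorphN; reflexivity. Qed.

Lemma inK_rat q : K (ratr q).
Proof. by exists q, 0; rewrite rmorph0 mul0r addr0. Qed.

Lemma inK_int (z : int) : K z%:~R.
Proof. by rewrite -(rmorph_int (@ratr algC)); apply: inK_rat. Qed.

Lemma inK_nat (n : nat) : K n%:R.
Proof. by rewrite -(rmorph_nat (@ratr algC)); apply: inK_rat. Qed.

Lemma inK0 : K 0. Proof. exact: (inK_nat 0). Qed.
Lemma inK1 : K 1. Proof. exact: (inK_nat 1). Qed.

Lemma inKD x y : K x -> K y -> K (x + y).
Proof.
move=> [a [b ->]] [c [d ->]]; exists (a + c), (b + d).
by rewrite !rmorphD /=; ring.
Qed.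

Lemma inKN x : K x -> K (- x).
Proof. by move=> [a [b ->]]; exists (- a), (- b); rewrite !rmorphN /=; ring. Qed.

Lemma inKB x y : K x -> K y -> K (x - y).
Proof. by move=> hx hy; apply: inKD => //; apply: inKN. Qed.

Lemma inKM x y : K x -> K y -> K (x * y).
Proof.
move=> [a [b ->]] [c [d ->]]; exists (a * c + m%:R * b * d), (a * d + b * c).
by rewrite !rmorphD !rmorphM /= rmorph_nat -ww; ring.
Qed.

Lemma inKX x n : K x -> K (x ^+ n).
Proof. by move=> hx; elim: n => [|n IH]; [rewrite expr0; apply: inK1|rewrite exprS; apply: inKM]. Qed.

Lemma sgw_rat q : sgw (ratr q) = ratr q.
Proof.
have -> : ratr q = ratr q + ratr 0 * w :> algC by rewrite rmorph0 mul0r addr0.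
by rewrite sgwE rmorph0 mul0r subr0 addr0.
Qed.

Lemma sgw_nat n : sgw n%:R = n%:R.
Proof. by rewrite -(rmorph_nat (@ratr algC)) sgw_rat. Qed.

Lemma sgw_int (z : int) : sgw z%:~R = z%:~R.
Proof. by rewrite -(rmorph_int (@ratr algC)) sgw_rat. Qed.

Lemma sgw0 : sgw 0 = 0. Proof. exact: (sgw_nat 0). Qed.
Lemma sgw1 : sgw 1 = 1. Proof. exact: (sgw_nat 1). Qed.

Lemma sgwK x : K x -> sgw (sgw x) = x.
Proof.
move=> [a [b ->]]; rewrite sgwE -mulNr -rmorphN sgwE rmorphN /=; ring.
Qed.

Lemma sgwD x y : K x -> K y -> sgw (x + y) = sgw x + sgw y.
Proof.
move=> [a [b ->]] [c [d ->]].
have -> : ratr a + ratr b * w + (ratr c + ratr d * w)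
   = ratr (a + c) + ratr (b + d) * w :> algC by rewrite !rmorphD /=; ring.
by rewrite !sgwE !rmorphD /=; ring.
Qed.

Lemma sgwN x : K x -> sgw (- x) = - sgw x.
Proof.
move=> [a [b ->]].
have -> : - (ratr a + ratr b * w) = ratr (- a) + ratr (- b) * w :> algC
  by rewrite !rmorphN /=; ring.
by rewrite !sgwE !rmorphN /=; ring.
Qed.

Lemma sgwB x y : K x -> K y -> sgw (x - y) = sgw x - sgw y.
Proof. by move=> hx hy; rewrite sgwD ?sgwN //; apply: inKN. Qed.

Lemma sgwM x y : K x -> K y -> sgw (x * y) = sgw x * sgw y.
Proof.
move=> [a [b ->]] [c [d ->]].
have -> : (ratr a + ratr b * w) * (ratr c + ratr d * w)
   = ratr (a * c + m%:R * b * d) + ratr (a * d + b * c) * w :> algC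
  by rewrite !rmorphD !rmorphM /= rmorph_nat -ww; ring.
by rewrite !sgwE !rmorphD !rmorphM /= rmorph_nat -ww; ring.
Qed.

Lemma sgwX x n : K x -> sgw (x ^+ n) = sgw x ^+ n.
Proof.
move=> hx; elim: n => [|n IH]; first by rewrite !expr0 sgw1.
by rewrite !exprS sgwM ?IH //; apply: inKX.
Qed.

Lemma sgw_eq0 x : K x -> (sgw x == 0) = (x == 0).
Proof.
move=> hx; apply/eqP/eqP => [h|->]; last exact: sgw0.
by rewrite -(sgwK hx) h sgw0.
Qed.

Lemma normK x : K x -> exists q : rat, x * sgw x = ratr q.
Proof.
move=> [a [b ->]]; exists (a ^+ 2 - m%:R * b ^+ 2); rewrite sgwE.
by rewrite !(rmorphB, rmorphM, rmorphXn, rmorph_nat) /= -ww; ring.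
Qed.

Lemma traceK x : K x -> exists q : rat, x + sgw x = ratr q.
Proof.
move=> [a [b ->]]; exists (a *+ 2); rewrite sgwE rmorphMn /=; ring.
Qed.

Lemma inKV x : K x -> K x^-1.
Proof.
move=> hx; have [->|nx] := eqVneq x 0; first by rewrite invr0; apply: inK0.
have [q hq] := normK hx.
have nq : ratr q != 0 :> algC by rewrite -hq mulf_neq0 // sgw_eq0.
have -> : x^-1 = sgw x * ratr q^-1.
  by rewrite fmorphV /= -hq invfM mulrCA mulfV ?mulr1 // sgw_eq0.
by apply: inKM; [apply: inK_sgw|apply: inK_rat].
Qed.

Lemma sgwV x : K x -> sgw x^-1 = (sgw x)^-1.
Proof.
move=> hx; have [->|nx] := eqVneq x 0; first by rewrite invr0 sgw0 invr0.
have h1 : sgw x * sgw x^-1 = 1 by rewrite -sgwM ?mulfV ?sgw1 //; apply: inKV.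
by rewrite -[sgw x^-1]mul1r -(mulVf (x := sgw x)) ?sgw_eq0 // -mulrA h1 mulr1.
Qed.

Lemma sgw_div x y : K x -> K y -> sgw (x / y) = sgw x / sgw y.
Proof. by move=> hx hy; rewrite sgwM ?sgwV //; apply: inKV. Qed.

Lemma horner_sgw (q : {poly rat}) x : K x ->
  K (map_poly ratr q).[x] /\ sgw (map_poly ratr q).[x] = (map_poly ratr q).[sgw x].
Proof.
move=> hx; elim/poly_ind: q => [|q c [IH1 IH2]].
  by rewrite rmorph0 !horner0 sgw0; split=> //; apply: inK0.
rewrite rmorphD rmorphM /= map_polyX map_polyC /= !hornerD !hornerMX !hornerC.
split; first exact: (inKD (inKM IH1 hx) (inK_rat c)).
by rewrite (sgwD (inKM IH1 hx) (inK_rat c)) (sgwM IH1 hx) IH2 sgw_rat.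
Qed.

Lemma sgw_Aint x : K x -> x \in Aint -> sgw x \in Aint.
Proof.
move=> hx hA.
have [q [Dq _] _] := minCpolyP x.
apply: (@root_monic_Aint (minCpoly x)); last exact: hA.
  rewrite /root Dq -(horner_sgw q hx).2 -Dq.
  by move: (root_minCpoly x); rewrite /root => /eqP ->; rewrite sgw0.
exact: minCpoly_monic.
Qed.

Local Notation O := (inO w).

Lemma inO_sgw x : O x -> O (sgw x).
Proof. by move=> [hx hA]; split; [apply: inK_sgw|apply: sgw_Aint]. Qed.

Lemma inO_int (z : int) : O z%:~R.
Proof. by split; [apply: inK_int|apply: Aint_int]. Qed.

Lemma inO_nat (n : nat) : O n%:R.
Proof. by split; [apply: inK_nat|apply: Aint_Cnat; apply: natr_nat]. Qed.

Lemma inO0 : O 0. Proof. exact: (inO_nat 0). Qed.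
Lemma inO1 : O 1. Proof. exact: (inO_nat 1). Qed.

Lemma inOD x y : O x -> O y -> O (x + y).
Proof. by move=> [? ?] [? ?]; split; [apply: inKD|apply: rpredD]. Qed.

Lemma inON x : O x -> O (- x).
Proof. by move=> [? ?]; split; [apply: inKN|rewrite rpredN]. Qed.

Lemma inOB x y : O x -> O y -> O (x - y).
Proof. by move=> hx hy; apply: inOD => //; apply: inON. Qed.

Lemma inOM x y : O x -> O y -> O (x * y).
Proof. by move=> [? ?] [? ?]; split; [apply: inKM|apply: rpredM]. Qed.

Lemma inOX x n : O x -> O (x ^+ n).
Proof. by move=> [? ?]; split; [apply: inKX|apply: rpredX]. Qed.

Lemma inO_ratint x q : O x -> x = ratr q -> exists z : int, x = z%:~R.
Proof.
move=> [_ hA] hq; apply/intrP; apply: Cint_rat_Aint => //.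
by rewrite hq Crat_rat.
Qed.

Lemma trace_int x : O x -> exists z : int, x + sgw x = z%:~R.
Proof.
move=> hx; have [q hq] := traceK hx.1.
by apply: (inO_ratint (q := q)) => //; apply: inOD => //; apply: inO_sgw.
Qed.

Lemma norm_int x : O x -> exists z : int, x * sgw x = z%:~R.
Proof.
move=> hx; have [q hq] := normK hx.1.
by apply: (inO_ratint (q := q)) => //; apply: inOM => //; apply: inO_sgw.
Qed.

Section IdealGen.
Variable I : algC -> Prop.
Hypothesis HI : is_ideal w I.

Lemma idO x : I x -> O x. Proof. by case: HI => h _ _ _; apply: h. Qed.
Lemma id0 : I 0. Proof. by case: HI. Qed.
Lemma idD x y : I x -> I y -> I (x + y). Proof. by case: HI => _ _ h _; apply: h. Qed.
Lemma idM r x : O r -> I x -> I (r * x). Proof. by case: HI => _ _ _ h; apply: h. Qed.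
Lemma idMr x r : O r -> I x -> I (x * r). Proof. by rewrite mulrC; apply: idM. Qed.
Lemma idN x : I x -> I (- x).
Proof. by move=> hx; rewrite -mulN1r; apply: idM => //; apply: inON; apply: inO1. Qed.
Lemma idB x y : I x -> I y -> I (x - y).
Proof. by move=> hx hy; apply: idD => //; apply: idN. Qed.

Lemma id_sum (T : eqType) (s : seq T) (f : T -> algC) :
  (forall q, q \in s -> I (f q)) -> I (\sum_(q <- s) f q).
Proof.
elim: s => [|a s IH] h; first by rewrite big_nil; apply: id0.
rewrite big_cons; apply: idD; first by apply: h; rewrite mem_head.
by apply: IH => q hq; apply: h; rewrite in_cons hq orbT.
Qed.

End IdealGen.

Lemma inO_ideal : is_ideal w O.
Proof.
split=> //; [exact: inO0|exact: inOD|exact: inOM].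
Qed.

Lemma inO_sum (T : eqType) (s : seq T) (f : T -> algC) :
  (forall q, q \in s -> O (f q)) -> O (\sum_(q <- s) f q).
Proof. exact: (id_sum inO_ideal). Qed.

Lemma idmul_ideal I J : is_ideal w I -> is_ideal w J -> is_ideal w (idmul I J).
Proof.
move=> hI hJ; split.
- move=> x [s [hs ->]]; apply: inO_sum => q /hs [h1 h2].
  by apply: inOM; [apply: (idO hI)|apply: (idO hJ)].
- by exists [::]; split=> //; rewrite big_nil.
- move=> x y [s1 [h1 ->]] [s2 [h2 ->]]; exists (s1 ++ s2); split; last by rewrite big_cat.
  by move=> q; rewrite mem_cat => /orP [/h1|/h2].
- move=> r x hr [s [hs ->]]; exists [seq (r * q.1, q.2) | q <- s]; split.
    move=> q /mapP [q' /hs [h1 h2] ->] /=; split=> //; exact: (idM hI).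
  by rewrite big_map mulr_sumr; apply: eq_bigr => q _; rewrite mulrA.
Qed.

Lemma idmul_single (I J : algC -> Prop) a b : I a -> J b -> idmul I J (a * b).
Proof. by move=> ha hb; exists [:: (a, b)]; split; [move=> q; rewrite inE => /eqP ->|rewrite big_seq1]. Qed.

Lemma idmul_subr I J x : (forall y, I y -> O y) -> is_ideal w J -> idmul I J x -> J x.
Proof.
move=> hI hJ [s [hs ->]]; apply: (id_sum hJ) => q /hs [h1 h2].
by apply: (idM hJ) => //; apply: hI.
Qed.

Lemma idmul_subl I J x : is_ideal w I -> (forall y, J y -> O y) -> idmul I J x -> I x.
Proof.
move=> hI hJ [s [hs ->]]; apply: (id_sum hI) => q /hs [h1 h2].
by apply: (idMr hI) => //; apply: hJ.
Qed.

Lemma idpowS P e : idpow w P e.+1 = idmul P (idpow w P e).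
Proof. by []. Qed.

Lemma idpow0 P : idpow w P 0 = O.
Proof. by []. Qed.

Lemma idpow_ideal P e : is_ideal w P -> is_ideal w (idpow w P e).
Proof.
move=> hP; elim: e => [|e IH]; first exact: inO_ideal.
by rewrite idpowS; apply: idmul_ideal.
Qed.

Lemma idpow_mono P e e' x : is_ideal w P -> (e' <= e)%N -> idpow w P e x -> idpow w P e' x.
Proof.
move=> hP; elim: e => [|e IH]; first by rewrite leqn0 => /eqP ->.
rewrite leq_eqVlt => /orP [/eqP -> //|] /IH h hx; apply: h.
by apply: (idmul_subr (I := P)) => //; [apply: idO|apply: idpow_ideal].
Qed.

Section PrimeGen.
Variable P : algC -> Prop.
Hypothesis HP : prime_ideal w P.
Let HI : is_ideal w P. Proof. by case: HP. Qed.

Lemma prN1 : ~ P 1. Proof. by case: HP. Qed.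

Lemma pr_mul x y : O x -> O y -> P (x * y) -> P x \/ P y.
Proof. by case: HP => _ _ h; apply: h. Qed.

Lemma pr_mulN x y : O x -> O y -> ~ P x -> ~ P y -> ~ P (x * y).
Proof. by move=> hx hy nx ny /(pr_mul hx hy) []. Qed.

Lemma pr_expN x k : O x -> ~ P x -> ~ P (x ^+ k).
Proof.
move=> hx nx; elim: k => [|k IH]; first by rewrite expr0; apply: prN1.
by rewrite exprS; apply: pr_mulN => //; apply: inOX.
Qed.

Lemma pr_ne0 b : ~ P b -> b != 0.
Proof. by move=> nb; apply/eqP => b0; apply: nb; rewrite b0; apply: (id0 HI). Qed.

Lemma vge_O y : O y -> vge w P y 0.
Proof. by move=> hy; exists y, 1; split=> //; [exact: inO1|exact: prN1|rewrite divr1]. Qed.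

Lemma vge_mono y e e' : (e' <= e)%N -> vge w P y e -> vge w P y e'.
Proof.
move=> hle [a [b [ha hb nb -> hp]]]; exists a, b; split=> //.
exact: (idpow_mono HI hle).
Qed.

Lemma vge_add y z e : vge w P y e -> vge w P z e -> vge w P (y + z) e.
Proof.
move=> [a [b [ha hb nb -> hpa]]] [c [d [hc hd nd -> hpc]]].
exists (a * d + c * b), (b * d); split.
- by apply: inOD; apply: inOM.
- exact: inOM.
- exact: pr_mulN.
- by rewrite addf_div ?pr_ne0 // [c * b]mulrC.
- by apply: (idD (idpow_ideal e HI)); apply: (idMr (idpow_ideal e HI)).
Qed.

Lemma vge_opp y e : vge w P y e -> vge w P (- y) e.
Proof.
move=> [a [b [ha hb nb -> hpa]]]; exists (- a), b; split=> //.
- exact: inON.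
- by rewrite mulNr.
- exact: (idN (idpow_ideal e HI)).
Qed.

Lemma vge_sub y z e : vge w P y e -> vge w P z e -> vge w P (y - z) e.
Proof. by move=> hy hz; apply: vge_add => //; apply: vge_opp. Qed.

Lemma vge_mul0 y z e : vge w P y 0 -> vge w P z e -> vge w P (y * z) e.
Proof.
move=> [a [b [ha hb nb -> hpa]]] [c [d [hc hd nd -> hpc]]].
exists (a * c), (b * d); split.
- exact: inOM.
- exact: inOM.
- exact: pr_mulN.
- by rewrite mulf_div.
- exact: (idM (idpow_ideal e HI)).
Qed.

Lemma vge_X0 y k : vge w P y 0 -> vge w P (y ^+ k) 0.
Proof.
move=> hy; elim: k => [|k IH]; first by rewrite expr0; apply: vge_O; apply: inO1.
by rewrite exprS; apply: vge_mul0.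
Qed.

Lemma unit_frac y : unit_at w P y ->
  exists a b, [/\ O a, O b, ~ P a, ~ P b & y = a / b].
Proof.
move=> [y0 [a [b [ha hb nb ya _]]] [c [d [hc hd nd yc _]]]].
exists a, b; split=> // pa.
have ab : a != 0 by move: y0; rewrite ya; apply: contra => /eqP ->; rewrite mul0r.
have e : a * c = b * d.
  have : y * y^-1 = 1 by rewrite mulfV.
  rewrite {1}ya yc mulf_div => /(congr1 (fun t => t * (b * d))).
  by rewrite mul1r divfK // mulf_neq0 // pr_ne0.
apply: (pr_mulN hb hd nb nd); rewrite -e.
by apply: (idMr HI).
Qed.

End PrimeGen.

Lemma intr_posz n : (Posz n)%:~R = n%:R :> algC.
Proof. by []. Qed.

Lemma bez z : ~~ (p %| z)%Z -> exists u v : int, u%:~R * z%:~R + v%:~R * p%:R = 1 :> algC.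
Proof.
move=> nd; have [u [v huv]] := Bezoutz z p.
have g1 : gcdz z p = 1.
  apply/eqP; rewrite -/(coprimez z p) coprimezE /= coprime_sym prime_coprime //.
exists u, v; rewrite -intr_posz -!intrM -intrD huv g1 //.
Qed.

Section PrimeP.
Variable P : algC -> Prop.
Hypothesis HP : prime_ideal w P.
Hypothesis Pp : P p%:R.
Let HI : is_ideal w P. Proof. by case: HP. Qed.

Lemma notP_int z : ~~ (p %| z)%Z -> ~ P z%:~R.
Proof.
move=> /bez [u [v h]] pz; apply: (prN1 HP); rewrite -h.
by apply: (idD HI); apply: (idM HI) => //; apply: inO_int.
Qed.

Lemma P_int z : P z%:~R -> (p %| z)%Z.
Proof. by move=> pz; case: (boolP (p %| z)%Z) => // /notP_int. Qed.

Lemma P_intp (c : int) : P (c%:~R * p%:R).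
Proof. by apply: (idM HI) => //; apply: inO_int. Qed.

Lemma inv_mod x : O x -> ~ P x -> exists y, O y /\ P (x * y - 1).
Proof.
move=> hx nx.
have [tz ht] := trace_int hx.
have [nz hn] := norm_int hx.
have hs := inO_sgw hx.
case: (boolP (p %| nz)%Z) => [/dvdzP [c hc]|nd].
  have psx : P (sgw x).
    have : P (x * sgw x) by rewrite hn hc intrM intr_posz; apply: P_intp.
    by case/(pr_mul HP hx hs).
  have nt : ~~ (p %| tz)%Z.
    apply/negP => /dvdzP [c' hc']; apply: nx.
    have -> : x = (x + sgw x) - sgw x by ring.
    by rewrite ht hc' intrM intr_posz; apply: (idB HI) => //; apply: P_intp.
  have [u [v huv]] := bez nt.
  exists u%:~R; split; first exact: inO_int.
  have -> : x * u%:~R - 1 = - (v%:~R * p%:R) - sgw x * u%:~R.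
    move: huv ht; move: (u%:~R) (v%:~R) (tz%:~R) (p%:R : algC) => U V T q huv ht.
    rewrite -huv -ht; ring.
  by apply: (idB HI); [apply: (idN HI); apply: P_intp|apply: (idMr HI) => //; apply: inO_int].
have [u [v huv]] := bez nd.
exists (sgw x * u%:~R); split; first by apply: inOM => //; apply: inO_int.
have -> : x * (sgw x * u%:~R) - 1 = - (v%:~R * p%:R).
  move: huv hn; move: (u%:~R) (v%:~R) (nz%:~R) (p%:R : algC) => U V T q huv hn.
  rewrite mulrA hn -huv; ring.
by apply: (idN HI); apply: P_intp.
Qed.

Lemma maximal Q : is_ideal w Q -> (forall x, P x -> Q x) -> ~ Q 1 ->
  forall x, Q x -> P x.
Proof.
move=> hQ sub nQ x qx; apply: NNPP => nx.
have [y [hy pxy]] := inv_mod (idO hQ qx) nx.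
apply: nQ; have -> : 1 = x * y - (x * y - 1) by ring.
by apply: (idB hQ); [apply: (idMr hQ)|apply: sub].
Qed.

End PrimeP.

Section Split.
Variables P1 P2 : algC -> Prop.
Hypothesis Hs : splits_as w p P1 P2.

Lemma HP1 : prime_ideal w P1. Proof. by case: Hs. Qed.
Lemma HP2 : prime_ideal w P2. Proof. by case: Hs. Qed.
Lemma HI1 : is_ideal w P1. Proof. by case: HP1. Qed.
Lemma HI2 : is_ideal w P2. Proof. by case: HP2. Qed.
Lemma Hneq : ~ (forall x, P1 x <-> P2 x). Proof. by case: Hs. Qed.
Lemma Hprod x : principal w p%:R x <-> idmul P1 P2 x. Proof. by case: Hs => _ _ _; apply. Qed.

Lemma prod_p : idmul P1 P2 p%:R.
Proof. by apply/Hprod; exists 1; split; [exact: inO1|rewrite mulr1]. Qed.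

Lemma P1p : P1 p%:R.
Proof. by apply: (idmul_subl HI1 _ prod_p); apply: (idO HI2). Qed.

Lemma P2p : P2 p%:R.
Proof. by apply: (idmul_subr _ HI2 prod_p); apply: (idO HI1). Qed.

Lemma prod_sub Q : prime_ideal w Q -> Q p%:R ->
  (forall x, P1 x -> Q x) \/ (forall x, P2 x -> Q x).
Proof.
move=> hQ Qp; have hIQ : is_ideal w Q by case: hQ.
have inQ x : idmul P1 P2 x -> Q x.
  by move/Hprod => [y [hy ->]]; apply: (idMr hIQ).
case: (classic (forall x, P1 x -> Q x)) => [h|h]; first by left.
right=> y py.
have [x hx] := not_all_ex_not _ _ h.
have [p1x nqx] := imply_to_and _ _ hx.
case: (pr_mul hQ (idO HI1 p1x) (idO HI2 py) (inQ _ (idmul_single p1x py))) => //.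
Qed.

Lemma gen Q : prime_ideal w Q -> Q p%:R ->
  (forall x, Q x <-> P1 x) \/ (forall x, Q x <-> P2 x).
Proof.
move=> hQ Qp; have hIQ : is_ideal w Q by case: hQ.
have nQ1 : ~ Q 1 by case: hQ.
case: (prod_sub hQ Qp) => h; [left|right] => x; split=> //; try exact: h.
  exact: (maximal HP1 P1p hIQ h nQ1).
exact: (maximal HP2 P2p hIQ h nQ1).
Qed.

Definition sgI (Q : algC -> Prop) x := O x /\ Q (sgw x).

Lemma sgI_prime Q : prime_ideal w Q -> prime_ideal w (sgI Q).
Proof.
move=> [[hO h0 hD hM] n1 hpr]; split; first split.
- by move=> x [].
- by split; [exact: inO0|rewrite sgw0].
- move=> x y [ox qx] [oy qy]; split; first exact: inOD.
  by rewrite sgwD; [apply: hD|apply: ox.1|apply: oy.1].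
- move=> r x hr [ox qx]; split; first exact: inOM.
  by rewrite sgwM; [apply: hM => //; apply: inO_sgw|apply: hr.1|apply: ox.1].
- by move=> [_]; rewrite sgw1.
- move=> x y hx hy [_]; rewrite sgwM; [|apply: hx.1|apply: hy.1].
  by move/hpr => h; case: h; try apply: inO_sgw => //; [left|right].
Qed.

Lemma sgI_p Q : Q p%:R -> sgI Q p%:R.
Proof. by move=> h; split; [apply: inO_nat|rewrite sgw_nat]. Qed.

Lemma sgI_K Q x : K x -> (sgI Q x <-> Q (sgw x)) \/ ~ (forall y, Q y -> O y).
Proof.
move=> kx; case: (classic (forall y, Q y -> O y)) => hQ; [left|by right].
split; first by case.
move=> q; split=> //; rewrite -(sgwK kx); apply: inO_sgw; exact: hQ.
Qed.

Lemma ex12 : exists x, P1 x /\ ~ P2 x.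
Proof.
apply: NNPP => h; apply: Hneq => x.
have s12 y : P1 y -> P2 y.
  by move=> py; apply: NNPP => np; apply: h; exists y.
have nP21 : ~ P2 1 by case: HP2.
split; first exact: s12.
exact: (maximal HP1 P1p HI2 s12 nP21).
Qed.

Lemma conjP x : K x -> (P2 x <-> P1 (sgw x)).
Proof.
move=> kx.
have sg1 := gen (sgI_prime HP1) (sgI_p P1p).
have O1 : forall y, P1 y -> O y := idO HI1.
have O2 : forall y, P2 y -> O y := idO HI2.
suff h : forall y, sgI P1 y <-> P2 y.
  rewrite -h; split; first by case.
  by move=> q; split=> //; rewrite -(sgwK kx); apply: inO_sgw; apply: O1.
case: sg1 => // h1.
exfalso.
have sg2 := gen (sgI_prime HP2) (sgI_p P2p).
case: sg2 => h2.
  apply: Hneq => y; split=> py.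
    have oy := O1 _ py.
    have q1 : P1 (sgw y) by case/h1: py.
    have : sgI P2 (sgw y) by apply/h2.
    by case=> _; rewrite (sgwK oy.1).
  have oy := O2 _ py.
  have : sgI P2 (sgw y) by split; [apply: inO_sgw|rewrite (sgwK oy.1)].
  by move/h2/h1 => [_]; rewrite (sgwK oy.1).
have [z [p1x np2x]] := ex12.
have ox := O1 _ p1x.
have q1 : P1 (sgw z) by case/h1: p1x.
have [nz hn] := norm_int ox.
have /dvdzP [c hc] : (p %| nz)%Z.
  by apply: (P_int HP1 P1p); rewrite -hn; apply: (idM HI1) => //; apply: inO_sgw.
have : P2 (z * sgw z) by rewrite hn hc intrM intr_posz; apply: (P_intp HP2 P2p) => //.
case/(pr_mul HP2 ox (inO_sgw ox)) => // q2.
by apply: np2x; apply/h2; split.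
Qed.


Lemma sgw_sum (s : seq (algC * algC)) :
  (forall q, q \in s -> K q.1 /\ K q.2) ->
  K (\sum_(q <- s) q.1 * q.2) /\
  sgw (\sum_(q <- s) q.1 * q.2) = \sum_(q <- s) sgw q.1 * sgw q.2.
Proof.
elim: s => [|a s IH] h; first by rewrite !big_nil sgw0; split=> //; apply: inK0.
have [k1 k2] := h a (mem_head _ _).
have [IH1 IH2] : K (\sum_(q <- s) q.1 * q.2) /\
  sgw (\sum_(q <- s) q.1 * q.2) = \sum_(q <- s) sgw q.1 * sgw q.2.
  by apply: IH => q hq; apply: h; rewrite in_cons hq orbT.
rewrite !big_cons; split; first by apply: inKD => //; apply: inKM.
by rewrite sgwD ?sgwM ?IH2 //; apply: inKM.
Qed.

Lemma conj_idpow e x : K x -> (idpow w P2 e x <-> idpow w P1 e (sgw x)).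
Proof.
elim: e x => [|e IH] x kx.
  rewrite !idpow0; split; first exact: inO_sgw.
  by move/inO_sgw; rewrite (sgwK kx).
have hI2e := idpow_ideal e HI2.
have hI1e := idpow_ideal e HI1.
rewrite !idpowS; split.
  move=> [s [hs ->]].
  have ks : forall q, q \in s -> K q.1 /\ K q.2.
    by move=> q /hs [a b]; split; [apply: (idO HI2 a).1|apply: (idO hI2e b).1].
  have [_ ->] := sgw_sum ks.
  exists [seq (sgw q.1, sgw q.2) | q <- s]; split; last by rewrite big_map.
  move=> q /mapP [q' hq' ->] /=; have [a b] := hs _ hq'; have [k1 k2] := ks _ hq'.
  by split; [apply/conjP|apply/IH].
move=> [s [hs hx]].
have ks : forall q, q \in [seq (sgw q.1, sgw q.2) | q <- s] -> K q.1 /\ K q.2.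
  by move=> q /mapP [q' _ ->]; split; apply: inK_sgw.
exists [seq (sgw q.1, sgw q.2) | q <- s]; split.
  move=> q /mapP [q' hq' ->] /=; have [a b] := hs _ hq'.
  have k1 : K q'.1 by apply: (idO HI1 a).1.
  have k2 : K q'.2 by apply: (idO hI1e b).1.
  split; [apply/conjP; first apply: inK_sgw|apply/IH; first apply: inK_sgw].
    by rewrite (sgwK k1).
  by rewrite (sgwK k2).
rewrite -(sgwK kx) hx.
have ks' : forall q, q \in s -> K q.1 /\ K q.2.
  move=> q hq; have [a b] := hs _ hq.
  by split; [apply: (idO HI1 a).1|apply: (idO hI1e b).1].
by have [_ ->] := sgw_sum ks'; rewrite big_map.
Qed.

Lemma conj_vge e y : K y -> (vge w P2 y e <-> vge w P1 (sgw y) e).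
Proof.
move=> ky; split.
  move=> [a [b [ha hb nb -> hpa]]].
  exists (sgw a), (sgw b); split.
  - exact: inO_sgw.
  - exact: inO_sgw.
  - by move/(conjP hb.1).
  - by rewrite sgw_div //; [apply: ha.1|apply: hb.1].
  - by apply/conj_idpow => //; apply: ha.1.
move=> [a [b [ha hb nb hy hpa]]].
exists (sgw a), (sgw b); split.
- exact: inO_sgw.
- exact: inO_sgw.
- by move/(conjP (inK_sgw _)); rewrite (sgwK hb.1).
- by rewrite -(sgwK ky) hy sgw_div //; [apply: ha.1|apply: hb.1].
- by apply/conj_idpow; [apply: inK_sgw|rewrite (sgwK ha.1)].
Qed.


Lemma p_neq0 : p%:R != 0 :> algC.
Proof. by rewrite pnatr_eq0 -lt0n prime_gt0. Qed.

Lemma pX_neq0 k : p%:R ^+ k != 0 :> algC.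
Proof. by rewrite expf_neq0 // p_neq0. Qed.

Lemma ex21 : exists x, P2 x /\ ~ P1 x.
Proof.
apply: NNPP => h; apply: Hneq => x.
have s21 y : P2 y -> P1 y.
  by move=> py; apply: NNPP => np; apply: h; exists y.
have nP11 : ~ P1 1 by case: HP1.
split; last exact: s21.
exact: (maximal HP2 P2p HI1 s21 nP11).
Qed.

Lemma pow_in k : idpow w P1 k (p%:R ^+ k).
Proof.
elim: k => [|k IH]; first by rewrite expr0; apply: inO1.
by rewrite exprS idpowS; apply: idmul_single => //; apply: P1p.
Qed.

Section WithS.
Variable s0 : algC.
Hypothesis s0P2 : P2 s0.
Hypothesis s0P1 : ~ P1 s0.
Let os0 : O s0. Proof. exact: (idO HI2 s0P2). Qed.

Lemma idpow_div e a : idpow w P1 e a -> exists c, O c /\ a * s0 ^+ e = p%:R ^+ e * c.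
Proof.
elim: e a => [|e IH] a.
  by rewrite idpow0 => ha; exists a; split=> //; rewrite !expr0 mulr1 mul1r.
rewrite idpowS => [[s [hs ->]]].
elim: s hs => [|q s IHs] hs.
  by exists 0; split; [apply: inO0|rewrite big_nil mul0r mulr0].
have [h1 h2] := hs q (mem_head _ _).
have [c' [oc' ec']] : exists c, O c /\ (\sum_(q <- s) q.1 * q.2) * s0 ^+ e.+1 = p%:R ^+ e.+1 * c.
  by apply: IHs => r hr; apply: hs; rewrite in_cons hr orbT.
have [c1 [oc1 e1]] : principal w p%:R (q.1 * s0) by apply/Hprod; apply: idmul_single.
have [c2 [oc2 e2]] := IH _ h2.
exists (c1 * c2 + c'); split; first by apply: inOD => //; apply: inOM.
rewrite big_cons mulrDl ec' exprS.
have -> : q.1 * q.2 * (s0 * s0 ^+ e) = (q.1 * s0) * (q.2 * s0 ^+ e) by ring.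
rewrite e1 e2 exprS; ring.
Qed.

Lemma s0_ne0 : s0 != 0.
Proof. exact: (pr_ne0 HP1 s0P1). Qed.

Lemma vge_div e y : vge w P1 y e -> vge w P1 (y / p%:R ^+ e) 0.
Proof.
move=> [a [b [ha hb nb -> hpa]]].
have [c [oc ec]] := idpow_div hpa.
have bn := pr_ne0 HP1 nb.
exists c, (b * s0 ^+ e); split=> //.
- by apply: inOM => //; apply: inOX.
- by apply: (pr_mulN HP1) => //; [apply: inOX|apply: (pr_expN HP1)].
- have hc : c = a * s0 ^+ e / p%:R ^+ e by rewrite ec [p%:R ^+ _ * c]mulrC mulfK // pX_neq0.
  rewrite hc; field.
  by rewrite pX_neq0 bn expf_neq0 // s0_ne0.
Qed.

Lemma exact_unit d Y : vge w P1 Y d.+1 -> ~ vge w P1 Y d.+2 ->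
  unit_at w P1 (Y / p%:R ^+ d.+1).
Proof.
move=> [a [b [ha hb nb hY hpa]]] nv.
have [c [oc ec]] := idpow_div hpa.
have bn := pr_ne0 HP1 nb.
have hc : c = a * s0 ^+ d.+1 / p%:R ^+ d.+1 by rewrite ec [p%:R ^+ _ * c]mulrC mulfK // pX_neq0.
have hbs : ~ P1 (b * s0 ^+ d.+1).
  by apply: (pr_mulN HP1) => //; [apply: inOX|apply: (pr_expN HP1)].
have obs : O (b * s0 ^+ d.+1) by apply: inOM => //; apply: inOX.
have bsn := pr_ne0 HP1 hbs.
have eY : Y / p%:R ^+ d.+1 = c / (b * s0 ^+ d.+1).
  rewrite hY hc; field.
  by rewrite pX_neq0 bn expf_neq0 // s0_ne0.
have nc : ~ P1 c.
  move=> pc; apply: nv.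
  exists (c * p%:R ^+ d.+1), (b * s0 ^+ d.+1); split=> //.
  - by apply: inOM => //; apply: inOX; apply: inO_nat.
  - rewrite hY hc; field.
    by rewrite pX_neq0 bn expf_neq0 // s0_ne0.
  - by rewrite idpowS; apply: idmul_single => //; apply: pow_in.
have cn := pr_ne0 HP1 nc.
rewrite eY; split.
- by rewrite mulf_neq0 // invr_eq0.
- by exists c, (b * s0 ^+ d.+1); split=> //.
- by exists (b * s0 ^+ d.+1), c; split=> //; rewrite invf_div.
Qed.

End WithS.

Lemma fermat_int z : ~~ (p %| z)%Z -> (p %| z ^+ (p - 1) - 1)%Z.
Proof.
move=> nd.
have chp := pchar_Fp p_prime.
have x0 : (z%:~R : 'F_p) != 0 by rewrite -(dvdz_pcharf chp).
rewrite (dvdz_pcharf chp) rmorphB rmorphXn rmorph1 /= subr_eq0.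
set x := (z%:~R : 'F_p) in x0 *.
have hx : x ^+ p = x by move: (expf_card x); rewrite card_Fp.
have hx' : x ^+ (p - 1).+1 = x by rewrite subn1 prednK // prime_gt0.
apply/eqP; apply: (mulfI x0); rewrite mulr1.
by rewrite -exprS.
Qed.

Lemma cong_int y : O y -> exists n : int, P1 (y - n%:~R).
Proof.
move=> oy.
have [x0 [p1x np2x]] := ex12.
have ox := idO HI1 p1x.
have nsx : ~ P1 (sgw x0).
  by move=> h; apply: np2x; apply/(conjP ox.1).
have [tz ht] := trace_int ox.
have nt : ~~ (p %| tz)%Z.
  apply/negP => /dvdzP [c hc]; apply: nsx.
  have -> : sgw x0 = (x0 + sgw x0) - x0 by ring.
  by rewrite ht hc intrM intr_posz; apply: (idB HI1) => //; apply: (P_intp HP1 P1p).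
have [u [v huv]] := bez nt.
have oyx : O (y * sgw x0) by apply: inOM => //; apply: inO_sgw.
have [Tz hT] := trace_int oyx.
exists (Tz * u); rewrite intrM -hT sgwM ?(sgwK ox.1); last by apply: inK_sgw.
  2: exact: oy.1.
have key : y - (y * sgw x0 + sgw y * x0) * u%:~R
    = u%:~R * (y - sgw y) * x0 + (y * v%:~R) * p%:R.
  move: huv ht; move: (u%:~R) (v%:~R) (tz%:~R) (p%:R : algC) => U V T q huv ht.
  have e : y = y * (U * T + V * q) by rewrite huv mulr1.
  by rewrite {1}e -ht; ring.
rewrite key.
apply: (idD HI1).
  apply: (idM HI1) => //.
  by apply: inOM; [apply: inO_int|apply: inOB => //; apply: inO_sgw].
apply: (idM HI1); last exact: P1p.
by apply: inOM => //; apply: inO_int.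
Qed.


Lemma fermatO y : O y -> ~ P1 y -> P1 (y ^+ (p - 1) - 1).
Proof.
move=> oy ny.
have [n hn] := cong_int oy.
have nd : ~~ (p %| n)%Z.
  apply/negP => /dvdzP [c hc]; apply: ny.
  have -> : y = (y - n%:~R) + n%:~R by ring.
  by apply: (idD HI1) => //; rewrite hc intrM intr_posz; apply: (P_intp HP1 P1p).
have dk k : P1 (y ^+ k - n%:~R ^+ k).
  elim: k => [|k IH]; first by rewrite !expr0 subrr; apply: (id0 HI1).
  have -> : y ^+ k.+1 - n%:~R ^+ k.+1 = y * (y ^+ k - n%:~R ^+ k) + n%:~R ^+ k * (y - n%:~R).
    by rewrite !exprS; ring.
  apply: (idD HI1); apply: (idM HI1) => //; apply: inOX; apply: inO_int.
have /dvdzP [c hc] := fermat_int nd.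
have -> : y ^+ (p - 1) - 1 = (y ^+ (p - 1) - n%:~R ^+ (p - 1)) + (n ^+ (p - 1) - 1)%:~R.
  by rewrite rmorphB rmorphXn rmorph1 /=; ring.
by apply: (idD HI1) => //; rewrite hc intrM intr_posz; apply: (P_intp HP1 P1p).
Qed.

Lemma vge_fermat al : unit_at w P1 al -> vge w P1 (al ^+ (p - 1) - 1) 1.
Proof.
move=> hal; have [a [b [oa ob na nb ->]]] := unit_frac HP1 hal.
have bn := pr_ne0 HP1 nb.
exists (a ^+ (p - 1) - b ^+ (p - 1)), (b ^+ (p - 1)); split.
- by apply: inOB; apply: inOX.
- exact: inOX.
- exact: (pr_expN HP1).
- by rewrite expr_div_n; field; rewrite expf_neq0.
- rewrite idpowS -[_ - _]mulr1; apply: idmul_single; last exact: inO1.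
  have -> : a ^+ (p - 1) - b ^+ (p - 1) = (a ^+ (p - 1) - 1) - (b ^+ (p - 1) - 1) by ring.
  by apply: (idB HI1); apply: fermatO.
Qed.


Lemma find_delta (Q : nat -> Prop) n : Q 1%N -> ~ Q n.+1 ->
  exists d, [/\ (d < n)%N, Q d.+1 & ~ Q d.+2].
Proof.
elim: n => [|n IH] q1 nq; first by [].
case: (classic (Q n.+1)) => h; first by exists n; split.
by have [d [dn ? ?]] := IH q1 h; exists d; split=> //; apply: ltnW.
Qed.

Lemma main_split n (a b : rat) :
  (1 <= n)%N ->
  let alpha : algC := ratr a + ratr b * w in
  alpha != 0 ->
  unit_at w P1 alpha -> unit_at w P2 alpha ->
  ratcong1 p n.+1 ((a ^+ 2 - m%:R * b ^+ 2) ^+ (p - 1)) ->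
  ((forall d, delta_ge w p P1 alpha d <-> delta_ge w p P2 alpha d)
   \/ (delta_ge w p P1 alpha n /\ delta_ge w p P2 alpha n))
  /\
  (~ kcong1 w P1 P2 p n.+1 (alpha ^+ (p - 1)) ->
   exists (delta : nat) (beta : algC),
     [/\ (delta < n)%N,
         delta_eq w p P1 alpha delta /\ delta_eq w p P2 alpha delta,
         alpha ^+ (p - 1) = 1 + p%:R * (p ^ delta)%:R * beta,
         unit_at w P1 beta &
         unit_at w P2 beta]).
Proof.
move=> hn alpha a0 u1 u2 [x [y [ndy hxy]]].
have kal : K alpha by exists a, b.
set u := alpha ^+ (p - 1).
have ku : K u by apply: inKX.
set A := u - 1.
have kA : K A by apply: inKB => //; apply: inK1.
set B := sgw A.
have hB : B = sgw u - 1 by rewrite /B /A sgwB ?sgw1 //; apply: inK1.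
have hnorm : alpha * sgw alpha = ratr (a ^+ 2 - m%:R * b ^+ 2).
  rewrite /alpha sgwE.
  by rewrite !(rmorphB, rmorphM, rmorphXn, rmorph_nat) /= -ww; ring.
set D := u * sgw u - 1.
have hD : D = (p ^ n.+1)%:R * x%:~R / y%:~R.
  have h := congr1 (@ratr algC) hxy.
  rewrite rmorphB rmorph1 rmorphXn /= -hnorm exprMn -sgwX // in h.
  by rewrite fmorph_div rmorphM /= rmorph_nat !rmorph_int in h.
have ny : ~ P1 y%:~R.
  by apply: (notP_int HP1 P1p); rewrite dvdzE.
have vD : vge w P1 D n.+1.
  exists ((p ^ n.+1)%:R * x%:~R), y%:~R; split=> //.
  - by apply: inOM; [apply: inO_nat|apply: inO_int].
  - exact: inO_int.
  - apply: (idMr (idpow_ideal _ HI1)); first exact: inO_int.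
    by rewrite natrX; apply: pow_in.
have vu1 : vge w P1 u 0.
  by apply: vge_X0 => //; [apply: HP1|case: u1].
have vsu1 : vge w P1 (sgw u) 0.
  apply/(conj_vge _ ku); apply: vge_X0; [apply: HP2|by case: u2].
have eB : B = D - A * sgw u by rewrite hB /D /A; ring.
have eA : A = D - B * u by rewrite hB /D /A; ring.
have C1 d : (d <= n.+1)%N -> (vge w P1 A d <-> vge w P1 B d).
  move=> hd; split=> h.
    rewrite eB; apply: (vge_sub HP1); first exact: (vge_mono HP1 hd).
    by rewrite mulrC; apply: (vge_mul0 HP1).
  rewrite eA; apply: (vge_sub HP1); first exact: (vge_mono HP1 hd).
  by rewrite mulrC; apply: (vge_mul0 HP1).
have C2 : ~ (vge w P1 A n.+1 /\ vge w P1 B n.+1) ->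
    forall d, vge w P1 A d <-> vge w P1 B d.
  move=> nb d; case: (leqP d n.+1) => hd; first exact: C1.
  have nA : ~ vge w P1 A n.+1.
    by move=> hA; apply: nb; split=> //; apply/(C1 _ (leqnn _)).
  have nB : ~ vge w P1 B n.+1 by move=> hB'; apply: nA; apply/(C1 _ (leqnn _)).
  split=> h; exfalso; [apply: nA|apply: nB]; exact: (vge_mono HP1 (ltnW hd) h).
have T2 d : delta_ge w p P2 alpha d <-> vge w P1 B d.+1.
  by rewrite /delta_ge -/u -/A; apply: conj_vge.
have T1 d : delta_ge w p P1 alpha d <-> vge w P1 A d.+1 by [].
have [s0 [s0P2 s0P1]] := ex21.
split.
  case: (classic (vge w P1 A n.+1 /\ vge w P1 B n.+1)) => [[h1 h2]|h].
    by right; split; [apply/T1|apply/T2].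
  by left=> d; rewrite T1 T2; apply: C2.
move=> nk.
have nb : ~ (vge w P1 A n.+1 /\ vge w P1 B n.+1).
  move=> [h1 h2]; apply: nk.
  exists (A / p%:R ^+ n.+1); split.
  - exact: (vge_div s0P2 s0P1).
  - apply/conj_vge; first by apply: inKM => //; apply: inKV; apply: inKX; apply: inK_nat.
    rewrite sgw_div //; last by apply: inKX; apply: inK_nat.
    rewrite sgwX ?sgw_nat; last exact: inK_nat.
    exact: (vge_div s0P2 s0P1).
  - by rewrite natrX mulrC divfK // pX_neq0.
have C3 := C2 nb.
have nA : ~ vge w P1 A n.+1 by move=> h; apply: nb; split=> //; apply/C3.
have A1 : vge w P1 A 1 by apply: vge_fermat.
have [d [dn hd1 hd2]] := find_delta A1 nA.
have hd2B : ~ vge w P1 B d.+2 by move/C3.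
have hd1B : vge w P1 B d.+1 by apply/C3.
exists d, (A / p%:R ^+ d.+1); split=> //.
- split=> d'.
    rewrite T1; split=> h; last by apply: (vge_mono HP1 _ hd1).
    by case: (leqP d' d) => // hlt; exfalso; apply: hd2; apply: (vge_mono HP1 _ h); rewrite ltnS.
  rewrite T2 -C3; split=> h; last by apply: (vge_mono HP1 _ hd1).
  by case: (leqP d' d) => // hlt; exfalso; apply: hd2; apply: (vge_mono HP1 _ h); rewrite ltnS.
- rewrite -/u natrX exprS; have pn := p_neq0; have pdn := pX_neq0 d.
  have -> : u = 1 + A by rewrite /A; ring.
  by field; rewrite pn pdn.
- exact: (exact_unit s0P2 s0P1).
have kb : K (A / p%:R ^+ d.+1).
  by apply: inKM => //; apply: inKV; apply: inKX; apply: inK_nat.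
have ksb : sgw (A / p%:R ^+ d.+1) = B / p%:R ^+ d.+1.
  rewrite sgw_div //; last by apply: inKX; apply: inK_nat.
  by rewrite sgwX ?sgw_nat; last exact: inK_nat.
have [_ hb0 hbi] := exact_unit s0P2 s0P1 hd1B hd2B.
have [hn0 _ _] := exact_unit s0P2 s0P1 hd1 hd2.
split=> //.
  by apply/conj_vge => //; rewrite ksb.
apply/conj_vge; first by apply: inKV.
by rewrite sgwV // ksb.
Qed.

End Split.

End Quad.

Theorem lemma5p1 (m p n : nat) (P1 P2 : algC -> Prop) (a b : rat) :
  (1 < m)%N -> (forall r : nat, (r * r != m)%N) ->
  prime p -> (2 < p)%N ->
  splits_as (sqm m) p P1 P2 ->
  (1 <= n)%N ->
  let alpha : algC := ratr a + ratr b * sqm m in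
  alpha != 0 ->
  unit_at (sqm m) P1 alpha -> unit_at (sqm m) P2 alpha ->
  ratcong1 p n.+1 ((a ^+ 2 - m%:R * b ^+ 2) ^+ (p - 1)) ->
  ((forall d, delta_ge (sqm m) p P1 alpha d <-> delta_ge (sqm m) p P2 alpha d)
   \/ (delta_ge (sqm m) p P1 alpha n /\ delta_ge (sqm m) p P2 alpha n))
  /\
  (~ kcong1 (sqm m) P1 P2 p n.+1 (alpha ^+ (p - 1)) ->
   exists (delta : nat) (beta : algC),
     [/\ (delta < n)%N,
         delta_eq (sqm m) p P1 alpha delta /\ delta_eq (sqm m) p P2 alpha delta,
         alpha ^+ (p - 1) = 1 + p%:R * (p ^ delta)%:R * beta,
         unit_at (sqm m) P1 beta &
         unit_at (sqm m) P2 beta]).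
Proof.
move=> _ nsq pp _ hs hn.
exact: (main_split nsq pp hs hn).
Qed.
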